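(* Let $n\ge 3$ and let $v_1,\dots,v_n:2^{[n]}\to\mathbb{R}$ be functions such that for every $i$: $v_i(S)\ge 0$; $v_i(S)=0$ if $i\notin S$; $v_i(S)\le v_i(R)$ whenever $S\subseteq R$; and $v_i(S\cup R)\le v_i(S)+v_i(R)$ for all $S,R\subseteq[n]$ with $i\in S\cap R$. Let $(p^*,S)$ be an optimal solution of $\mathcal{F}^{(3)}$, i.e. $S\subseteq[n]$, $|S|\ge 3$, $p^*\ge 0$, $v_i(S)\ge p^*$ for all $i\in S$, and $p^*|S|$ equals $\max\{c|S'| : c\ge 0, S'\subseteq[n], |S'|\ge 3, v_i(S')\ge c\ \forall i\in S'\}$. Let $A,B,C$ be a partition of $[n]$ (parts may be empty). For $X\in\{A,B\}$ define $r_X(C)=\max\{c\cdot|T| : c\ge 0,\ T\subseteq C,\ v_i(T\cup X)\ge c\text{ for all } i\in T\}$, let $r(C)=\max\{r_A(C),r_B(C)\}$ and $r_{\mathcal{F}}(C)=|S\cap C|\cdot p^*$. Then $r(C)\ge r_{\mathcal{F}}(C)/4$. *)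

(* Defs.v *)
From mathcomp Require Import all_boot all_order all_algebra.
Set Implicit Arguments. Unset Strict Implicit. Unset Printing Implicit Defensive.
Import Order.TTheory GRing.Theory Num.Theory.
Local Open Scope ring_scope.

Definition is_maxval (R : realFieldType) (E : R -> Prop) (m : R) : Prop :=
  E m /\ forall x, E x -> x <= m.

Definition valid_vals (R : realFieldType) (n : nat)
  (v : 'I_n -> {set 'I_n} -> R) : Prop :=
  forall i : 'I_n,
    (forall S : {set 'I_n}, 0 <= v i S) /\
    (forall S : {set 'I_n}, i \notin S -> v i S = 0) /\
    (forall S T : {set 'I_n}, S \subset T -> v i S <= v i T) /\
    (forall S T : {set 'I_n}, i \in S :&: T -> v i (S :|: T) <= v i S + v i T).

Definition F3val (R : realFieldType) (n : nat) (v : 'I_n -> {set 'I_n} -> R)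
  (x : R) : Prop :=
  exists (c : R) (S' : {set 'I_n}),
    [/\ 0 <= c, (3 <= #|S'|)%N, (forall i, i \in S' -> c <= v i S') &
        x = c * (#|S'|%:R)].

Definition rXval (R : realFieldType) (n : nat) (v : 'I_n -> {set 'I_n} -> R)
  (X C : {set 'I_n}) (x : R) : Prop :=
  exists (c : R) (T : {set 'I_n}),
    [/\ 0 <= c, T \subset C, (forall i, i \in T -> c <= v i (T :|: X)) &
        x = c * (#|T|%:R)].

(* Main.v *)
Require Import Defs.
From mathcomp Require Import all_boot all_order all_algebra.
From mathcomp Require Import ring lra.
Import Order.TTheory GRing.Theory Num.Theory.
Local Open Scope ring_scope.

Lemma split_stable (R : realFieldType) (n : nat) (v : 'I_n -> {set 'I_n} -> R)
  (p : R) (S A B C : {set 'I_n}) :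
  valid_vals v -> (forall i, i \in S -> p <= v i S) ->
  A :|: B :|: C = [set: 'I_n] ->
  exists P : {set 'I_n},
    [/\ P \subset S :&: C,
        (forall i, i \in P -> p / 2 <= v i (P :|: A)) &
        (forall i, i \in (S :&: C) :\: P -> p / 2 <= v i (((S :&: C) :\: P) :|: B))].
Proof.
move=> hv HS hU.
set T := S :&: C.
pose stab (X : {set 'I_n}) := (X \subset T) && [forall i in X, p / 2 <= v i (X :|: A)].
have st0 : stab set0.
  by rewrite /stab sub0set /=; apply/forall_inP => i; rewrite in_set0.
case: (maxset_exists st0) => P maxP _.
have /andP[PT /forall_inP Pst] := maxsetp maxP.
exists P; split => //.
move=> i iQ.
have [iP iT] : i \notin P /\ i \in T by move: iQ; rewrite in_setD => /andP[].
have iS : i \in S by move: iT; rewrite in_setI => /andP[].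
rewrite leNgt; apply/negP => Hlt.
have [v0 [vz [vmono vsub]]] := hv i.
set Q := T :\: P in Hlt iQ *.
have key : p <= v i (P :|: [set i] :|: A) + v i (Q :|: B).
  apply: le_trans (HS i iS) _.
  apply: le_trans (vsub _ _ _).
    apply: vmono; apply/subsetP => x xS.
    have : x \in A :|: B :|: C by rewrite hU inE.
    rewrite !in_setU => /orP[/orP[xA|xB]|xC].
    - by rewrite xA !orbT.
    - by rewrite xB !orbT.
    - have xT : x \in T by rewrite in_setI xS xC.
      case xP: (x \in P); first done.
      by rewrite in_setD xP xT !orbT.
  by rewrite in_setI !in_setU iQ set11 !orbT.
have Hi : p / 2 < v i (P :|: [set i] :|: A) by lra.
have stPi : stab (P :|: [set i]).
  apply/andP; split.
    by rewrite subUset PT sub1set.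
  apply/forall_inP => j; rewrite in_setU => /orP[jP|/set1P ->].
    apply: le_trans (Pst j jP) _.
    have [_ [_ [vm _]]] := hv j.
    by apply: vm; rewrite setUAC subsetUl.
  exact: ltW.
have := maxsetsup maxP stPi (subsetUl _ _).
move=> eq; move: iP; rewrite -eq in_setU set11 orbT //.
Qed.

Theorem lemma2 (R : realFieldType) (n : nat) (v : 'I_n -> {set 'I_n} -> R)
  (pstar : R) (S A B C : {set 'I_n}) (rA rB : R) :
  (3 <= n)%N ->
  valid_vals v ->
  (3 <= #|S|)%N -> 0 <= pstar -> (forall i, i \in S -> pstar <= v i S) ->
  is_maxval (F3val v) (pstar * #|S|%:R) ->
  [disjoint A & B] -> [disjoint A & C] -> [disjoint B & C] ->
  A :|: B :|: C = [set: 'I_n] ->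
  is_maxval (rXval v A C) rA ->
  is_maxval (rXval v B C) rB ->
  Num.max rA rB >= (#|S :&: C|%:R * pstar) / 4.
Proof.
move=> _ hv _ p0 HS _ _ _ _ hU [_ mA] [_ mB].
have [P [PT Pst Qst]] := @split_stable R n v pstar S A B C hv HS hU.
set T := S :&: C in PT Qst *.
set Q := T :\: P in Qst.
have TC : T \subset C by apply: subsetIr.
have hA : pstar / 2 * #|P|%:R <= rA.
  apply: mA; exists (pstar / 2), P; split => //.
  - lra.
  - exact: subset_trans PT TC.
have hB : pstar / 2 * #|Q|%:R <= rB.
  apply: mB; exists (pstar / 2), Q; split => //.
  - lra.
  - exact: subset_trans (subsetDl _ _) TC.
have hk : #|T| = (#|P| + #|Q|)%N.
  by rewrite -(cardsID P T) (setIidPr PT).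
have hm : rA + rB <= 2 * Num.max rA rB.
  have h1 : rA <= Num.max rA rB by rewrite le_max lexx.
  have h2 : rB <= Num.max rA rB by rewrite le_max lexx orbT.
  lra.
rewrite hk natrD.
move: hA hB; set a := #|P|%:R; set b := #|Q|%:R => hA hB.
lra.
Qed.
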